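(* Let $G$ be a finite simple robust graph, and let $uv \in E(G)$ with $d(u) = 7$ and $d(v) = 6$. If $\{v\}$ is not reducible in $G$ and $u$ subsumes $v$, then $\{u,v\}$ is reducible in $G$.
   Context: $N[x] = N(x)\cup\{x\}$. For distinct vertices $u,v$, $u$ subsumes $v$ if $N[u] \supseteq N[v]$. $G$ is robust if for every $x\in V(G)$, every component of $G[N(x)]$ has at least $5$ vertices. For a set $\mathcal{S}$ of triangles, an $\mathcal{S}$-edge is an edge of a triangle in $\mathcal{S}$. A nonempty set $V_0 \subseteq V(G)$ is reducible if there exist a set $\mathcal{S}$ of pairwise edge-disjoint triangles of $G$ and a set $X \subseteq E(G)$ such that (i) $|X| \leq 2|\mathcal{S}|$; (ii) $G - X$ has no triangle containing a vertex of $V_0$; (iii) $X$ contains every $\mathcal{S}$-edge whose endpoints both lie outside $V_0$. *)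

(* Defs.v *)
From mathcomp Require Import all_boot.
Set Implicit Arguments. Unset Strict Implicit. Unset Printing Implicit Defensive.

(* A finite simple graph: vertex type T : finType, adjacency e : rel T,
   assumed symmetric and irreflexive (hypotheses of the theorem). *)
Section Graph.
Variables (T : finType) (e : rel T).

Definition nbhd (x : T) : {set T} := [set y | e x y].
Definition cnbhd (x : T) : {set T} := x |: nbhd x.

Definition deg (x : T) : nat := #|nbhd x|.

Definition subsumes (u v : T) : Prop := u != v /\ cnbhd v \subset cnbhd u.

Definition induced_rel (S : {set T}) : rel T :=
  fun a b => [&& a \in S, b \in S & e a b].

Definition component (S : {set T}) (y : T) : {set T} :=
  [set z in S | connect (induced_rel S) y z].

Definition robust : Prop :=
  forall x y, y \in nbhd x -> 5 <= #|component (nbhd x) y|.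

Definition is_edge (f : {set T}) : Prop :=
  exists a b, e a b /\ f = [set a; b].

Definition is_triangle (t : {set T}) : Prop :=
  #|t| = 3 /\ {in t &, forall a b, a != b -> e a b}.

Definition tri_edge (t f : {set T}) : Prop := f \subset t /\ #|f| = 2.

Definition reducible (V0 : {set T}) : Prop :=
  V0 != set0 /\
  exists (S X : {set {set T}}),
    (forall t, t \in S -> is_triangle t) /\
    (forall t1 t2, t1 \in S -> t2 \in S -> t1 != t2 -> #|t1 :&: t2| <= 1) /\
    (forall f, f \in X -> is_edge f) /\
    #|X| <= 2 * #|S| /\
    (* (ii) G - X has no triangle containing a vertex of V0 *)
    (forall t, is_triangle t -> ~~ [disjoint t & V0] ->
       exists f, tri_edge t f /\ f \in X) /\
    (forall t f, t \in S -> tri_edge t f -> [disjoint f & V0] -> f \in X).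

End Graph.

(* Main.v *)
Require Import Defs.
From mathcomp Require Import all_boot.
Set Implicit Arguments. Unset Strict Implicit. Unset Printing Implicit Defensive.

Definition pairs : seq (nat*nat) :=
  [seq p <- allpairs pair (iota 2 5) (iota 2 5) | p.1 < p.2].
Definition pbit (bs : seq bool) (a b : nat) := nth false bs (index (a,b) pairs).
Definition gn (bs : seq bool) (i j : nat) : bool :=
  (i != j) && [|| i < 2, j < 2 | pbit bs (minn i j) (maxn i j)].
Definition lst (p : nat * nat * nat) : seq nat := [:: p.1.1; p.1.2; p.2].
Definition okS (bs : seq bool) (Sl : seq (nat*nat*nat)) : bool :=
  [&& uniq Sl, all (fun T => let l := lst T in
        [&& all (fun a => a < 7) l, uniq l &
            all (fun a => all (fun b => (a == b) || gn bs a b) l) l]) Sl,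
   all (fun T1 => all (fun T2 => (T1 == T2) || (count (mem (lst T2)) (lst T1) <= 1)) Sl) Sl &
   2 + count id bs <= 2 * size Sl].
Fixpoint all_bs n : seq (seq bool) :=
  if n is n'.+1 then map (cons false) (all_bs n') ++ map (cons true) (all_bs n')
  else [:: [::]].
Definition table : seq (seq (nat*nat*nat)) := [::
[:: (0,1,2)];
[:: (0,1,2); (0,5,6)];
[:: (0,1,2); (0,4,6)];
[:: (0,1,2); (0,4,6)];
[:: (0,1,2); (0,4,5)];
[:: (0,1,2); (0,4,5)];
[:: (0,1,2); (0,4,5)];
[:: (0,1,2); (0,4,5); (1,4,6)];
[:: (0,1,2); (0,3,6)];
[:: (0,1,2); (0,3,6)];
[:: (0,1,2); (0,3,6)];
[:: (0,1,2); (0,3,6); (1,4,6)];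
[:: (0,1,2); (0,3,6)];
[:: (0,1,2); (0,3,6); (0,4,5)];
[:: (0,1,2); (0,3,6); (0,4,5)];
[:: (0,1,2); (0,3,6); (0,4,5)];
[:: (0,1,2); (0,3,5)];
[:: (0,1,2); (0,3,5)];
[:: (0,1,2); (0,3,5)];
[:: (0,1,2); (0,3,5); (0,4,6)];
[:: (0,1,2); (0,3,5)];
[:: (0,1,2); (0,3,5); (1,4,5)];
[:: (0,1,2); (0,3,5); (0,4,6)];
[:: (0,1,2); (0,3,5); (0,4,6)];
[:: (0,1,2); (0,3,5)];
[:: (0,1,2); (0,3,5); (1,3,6)];
[:: (0,1,2); (0,3,5); (0,4,6)];
[:: (0,1,2); (0,3,5); (0,4,6)];
[:: (0,1,2); (0,3,5); (1,3,6)];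
[:: (0,1,2); (0,3,5); (1,3,6)];
[:: (0,1,2); (0,3,5); (0,4,6)];
[:: (0,1,2); (0,3,5); (0,4,6); (1,3,6)];
[:: (0,1,2); (0,3,4)];
[:: (0,1,2); (0,3,4)];
[:: (0,1,2); (0,3,4)];
[:: (0,1,2); (0,3,4); (0,5,6)];
[:: (0,1,2); (0,3,4)];
[:: (0,1,2); (0,3,4); (0,5,6)];
[:: (0,1,2); (0,3,4); (1,4,5)];
[:: (0,1,2); (0,3,4); (0,5,6)];
[:: (0,1,2); (0,3,4)];
[:: (0,1,2); (0,3,4); (0,5,6)];
[:: (0,1,2); (0,3,4); (1,3,6)];
[:: (0,1,2); (0,3,4); (0,5,6)];
[:: (0,1,2); (0,3,4); (1,3,6)];
[:: (0,1,2); (0,3,4); (0,5,6)];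
[:: (0,1,2); (0,3,4); (1,3,6)];
[:: (0,1,2); (0,3,4); (0,5,6); (1,3,6)];
[:: (0,1,2); (0,3,4)];
[:: (0,1,2); (0,3,4); (0,5,6)];
[:: (0,1,2); (0,3,4); (1,3,5)];
[:: (0,1,2); (0,3,4); (0,5,6)];
[:: (0,1,2); (0,3,4); (1,3,5)];
[:: (0,1,2); (0,3,4); (0,5,6)];
[:: (0,1,2); (0,3,4); (1,3,5)];
[:: (0,1,2); (0,3,4); (0,5,6); (1,3,5)];
[:: (0,1,2); (0,3,4); (1,3,5)];
[:: (0,1,2); (0,3,4); (0,5,6)];
[:: (0,1,2); (0,3,4); (1,3,5)];
[:: (0,1,2); (0,3,4); (0,5,6); (1,3,5)];
[:: (0,1,2); (0,3,4); (1,3,5)];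
[:: (0,1,2); (0,3,4); (0,5,6); (1,3,5)];
[:: (0,1,2); (0,3,4); (1,3,5); (1,4,6)];
[:: (0,1,2); (0,3,4); (0,5,6); (1,3,5)];
[:: (0,1,3); (0,2,6)];
[:: (0,1,2); (0,5,6)];
[:: (0,1,2); (0,4,6)];
[:: (0,1,2); (0,4,6); (1,5,6)];
[:: (0,1,2); (0,4,5)];
[:: (0,1,2); (0,4,5); (1,5,6)];
[:: (0,1,2); (0,4,5); (1,4,6)];
[:: (0,1,2); (0,4,5); (1,4,6)];
[:: (0,1,2); (0,3,6)];
[:: (0,1,2); (0,3,6); (1,5,6)];
[:: (0,1,2); (0,3,6); (1,4,6)];
[:: (0,1,2); (0,3,6); (1,4,6)];
[:: (0,1,2); (0,3,6); (0,4,5)];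
[:: (0,1,2); (0,3,6); (0,4,5)];
[:: (0,1,2); (0,3,6); (0,4,5)];
[:: (0,1,2); (0,3,6); (0,4,5); (1,4,6)];
[:: (0,1,2); (0,3,5)];
[:: (0,1,2); (0,3,5); (1,5,6)];
[:: (0,1,2); (0,3,5); (0,4,6)];
[:: (0,1,2); (0,3,5); (0,4,6)];
[:: (0,1,2); (0,3,5); (1,4,5)];
[:: (0,1,2); (0,3,5); (1,4,5)];
[:: (0,1,2); (0,3,5); (0,4,6)];
[:: (0,1,2); (0,3,5); (0,4,6); (1,4,5)];
[:: (0,1,2); (0,3,5); (1,3,6)];
[:: (0,1,2); (0,3,5); (1,3,6)];
[:: (0,1,2); (0,3,5); (0,4,6)];
[:: (0,1,2); (0,3,5); (0,4,6); (1,3,6)];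
[:: (0,1,2); (0,3,5); (1,3,6)];
[:: (0,1,2); (0,3,5); (1,3,6); (1,4,5)];
[:: (0,1,2); (0,3,5); (0,4,6); (1,3,6)];
[:: (0,1,2); (0,3,5); (0,4,6); (1,3,6)];
[:: (0,1,2); (0,3,4)];
[:: (0,1,2); (0,3,4); (0,5,6)];
[:: (0,1,2); (0,3,4); (1,4,6)];
[:: (0,1,2); (0,3,4); (0,5,6)];
[:: (0,1,2); (0,3,4); (1,4,5)];
[:: (0,1,2); (0,3,4); (0,5,6)];
[:: (0,1,2); (0,3,4); (1,4,5)];
[:: (0,1,2); (0,3,4); (0,5,6); (1,4,5)];
[:: (0,1,2); (0,3,4); (1,3,6)];
[:: (0,1,2); (0,3,4); (0,5,6)];
[:: (0,1,2); (0,3,4); (1,3,6)];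
[:: (0,1,2); (0,3,4); (0,5,6); (1,3,6)];
[:: (0,1,2); (0,3,4); (1,3,6)];
[:: (0,1,2); (0,3,4); (0,5,6); (1,3,6)];
[:: (0,1,2); (0,3,4); (1,3,6); (1,4,5)];
[:: (0,1,2); (0,3,4); (0,5,6); (1,3,6)];
[:: (0,1,2); (0,3,4); (1,3,5)];
[:: (0,1,2); (0,3,4); (0,5,6)];
[:: (0,1,2); (0,3,4); (1,3,5)];
[:: (0,1,2); (0,3,4); (0,5,6); (1,3,5)];
[:: (0,1,2); (0,3,4); (1,3,5)];
[:: (0,1,2); (0,3,4); (0,5,6); (1,3,5)];
[:: (0,1,2); (0,3,4); (1,3,5); (1,4,6)];
[:: (0,1,2); (0,3,4); (0,5,6); (1,3,5)];
[:: (0,1,2); (0,3,4); (1,3,5)];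
[:: (0,1,2); (0,3,4); (0,5,6); (1,3,5)];
[:: (0,1,2); (0,3,4); (1,3,5); (1,4,6)];
[:: (0,1,2); (0,3,4); (0,5,6); (1,3,5)];
[:: (0,1,2); (0,3,4); (1,3,6); (1,4,5)];
[:: (0,1,2); (0,3,4); (0,5,6); (1,3,5)];
[:: (0,1,2); (0,3,4); (1,3,5); (1,4,6)];
[:: (0,1,2); (0,3,4); (0,5,6); (1,3,5); (1,4,6)];
[:: (0,1,3); (0,2,5)];
[:: (0,1,2); (0,5,6)];
[:: (0,1,2); (0,4,6)];
[:: (0,1,2); (0,4,6); (1,5,6)];
[:: (0,1,2); (0,4,5)];
[:: (0,1,2); (0,4,5); (1,5,6)];
[:: (0,1,2); (0,4,5); (1,4,6)];
[:: (0,1,2); (0,4,5); (1,4,6)];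
[:: (0,1,2); (0,3,6)];
[:: (0,1,2); (0,3,6); (1,5,6)];
[:: (0,1,2); (0,3,6); (1,4,6)];
[:: (0,1,2); (0,3,6); (1,4,6)];
[:: (0,1,2); (0,3,6); (0,4,5)];
[:: (0,1,2); (0,3,6); (0,4,5)];
[:: (0,1,2); (0,3,6); (0,4,5)];
[:: (0,1,2); (0,3,6); (0,4,5); (1,4,6)];
[:: (0,1,2); (0,3,5)];
[:: (0,1,2); (0,3,5); (1,5,6)];
[:: (0,1,2); (0,3,5); (0,4,6)];
[:: (0,1,2); (0,3,5); (0,4,6)];
[:: (0,1,2); (0,3,5); (1,4,5)];
[:: (0,1,2); (0,3,5); (1,4,5)];
[:: (0,1,2); (0,3,5); (0,4,6)];
[:: (0,1,2); (0,3,5); (0,4,6); (1,4,5)];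
[:: (0,1,2); (0,3,5); (1,3,6)];
[:: (0,1,2); (0,3,5); (1,3,6)];
[:: (0,1,2); (0,3,5); (0,4,6)];
[:: (0,1,2); (0,3,5); (0,4,6); (1,3,6)];
[:: (0,1,2); (0,3,5); (1,3,6)];
[:: (0,1,2); (0,3,5); (1,3,6); (1,4,5)];
[:: (0,1,2); (0,3,5); (0,4,6); (1,3,6)];
[:: (0,1,2); (0,3,5); (0,4,6); (1,3,6)];
[:: (0,1,2); (0,3,4)];
[:: (0,1,2); (0,3,4); (0,5,6)];
[:: (0,1,2); (0,3,4); (1,4,6)];
[:: (0,1,2); (0,3,4); (0,5,6)];
[:: (0,1,2); (0,3,4); (1,4,5)];
[:: (0,1,2); (0,3,4); (0,5,6)];
[:: (0,1,2); (0,3,4); (1,4,5)];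
[:: (0,1,2); (0,3,4); (0,5,6); (1,4,5)];
[:: (0,1,2); (0,3,4); (1,3,6)];
[:: (0,1,2); (0,3,4); (0,5,6)];
[:: (0,1,2); (0,3,4); (1,3,6)];
[:: (0,1,2); (0,3,4); (0,5,6); (1,3,6)];
[:: (0,1,2); (0,3,4); (1,3,6)];
[:: (0,1,2); (0,3,4); (0,5,6); (1,3,6)];
[:: (0,1,2); (0,3,4); (1,3,6); (1,4,5)];
[:: (0,1,2); (0,3,4); (0,5,6); (1,3,6)];
[:: (0,1,2); (0,3,4); (1,3,5)];
[:: (0,1,2); (0,3,4); (0,5,6)];
[:: (0,1,2); (0,3,4); (1,3,5)];
[:: (0,1,2); (0,3,4); (0,5,6); (1,3,5)];
[:: (0,1,2); (0,3,4); (1,3,5)];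
[:: (0,1,2); (0,3,4); (0,5,6); (1,3,5)];
[:: (0,1,2); (0,3,4); (1,3,5); (1,4,6)];
[:: (0,1,2); (0,3,4); (0,5,6); (1,3,5)];
[:: (0,1,2); (0,3,4); (1,3,5)];
[:: (0,1,2); (0,3,4); (0,5,6); (1,3,5)];
[:: (0,1,2); (0,3,4); (1,3,5); (1,4,6)];
[:: (0,1,2); (0,3,4); (0,5,6); (1,3,5)];
[:: (0,1,2); (0,3,4); (1,3,6); (1,4,5)];
[:: (0,1,2); (0,3,4); (0,5,6); (1,3,5)];
[:: (0,1,2); (0,3,4); (1,3,5); (1,4,6)];
[:: (0,1,2); (0,3,4); (0,5,6); (1,3,5); (1,4,6)];
[:: (0,1,3); (0,2,5)];
[:: (0,1,3); (0,2,5); (1,2,6)];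
[:: (0,1,3); (0,2,5); (0,4,6)];
[:: (0,1,2); (0,4,6); (1,5,6)];
[:: (0,1,3); (0,2,5); (1,2,6)];
[:: (0,1,2); (0,4,5); (1,5,6)];
[:: (0,1,2); (0,4,5); (1,4,6)];
[:: (0,1,2); (0,4,5); (1,4,6); (2,5,6)];
[:: (0,1,3); (0,2,5); (1,2,6)];
[:: (0,1,2); (0,3,6); (1,5,6)];
[:: (0,1,2); (0,3,6); (1,4,6)];
[:: (0,1,2); (0,3,6); (1,4,6); (2,5,6)];
[:: (0,1,2); (0,3,6); (0,4,5)];
[:: (0,1,2); (0,3,6); (0,4,5); (1,5,6)];
[:: (0,1,2); (0,3,6); (0,4,5); (1,4,6)];
[:: (0,1,2); (0,3,6); (0,4,5); (1,4,6)];
[:: (0,1,3); (0,2,5); (1,2,6)];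
[:: (0,1,2); (0,3,5); (1,5,6)];
[:: (0,1,2); (0,3,5); (0,4,6)];
[:: (0,1,2); (0,3,5); (0,4,6); (1,5,6)];
[:: (0,1,2); (0,3,5); (1,4,5)];
[:: (0,1,2); (0,3,5); (1,4,5); (2,5,6)];
[:: (0,1,2); (0,3,5); (0,4,6); (1,4,5)];
[:: (0,1,2); (0,3,5); (0,4,6); (1,4,5)];
[:: (0,1,2); (0,3,5); (1,3,6)];
[:: (0,1,2); (0,3,5); (1,3,6); (2,5,6)];
[:: (0,1,2); (0,3,5); (0,4,6); (1,3,6)];
[:: (0,1,2); (0,3,5); (0,4,6); (1,3,6)];
[:: (0,1,2); (0,3,5); (1,3,6); (1,4,5)];
[:: (0,1,2); (0,3,5); (1,3,6); (1,4,5)];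
[:: (0,1,2); (0,3,5); (0,4,6); (1,3,6)];
[:: (0,1,2); (0,3,5); (0,4,6); (1,3,6); (1,4,5)];
[:: (0,1,3); (0,2,5); (1,2,6)];
[:: (0,1,2); (0,3,4); (0,5,6)];
[:: (0,1,2); (0,3,4); (1,4,6)];
[:: (0,1,2); (0,3,4); (0,5,6); (1,4,6)];
[:: (0,1,2); (0,3,4); (1,4,5)];
[:: (0,1,2); (0,3,4); (0,5,6); (1,4,5)];
[:: (0,1,3); (0,2,5); (0,4,6); (1,2,6)];
[:: (0,1,2); (0,3,4); (0,5,6); (1,4,5)];
[:: (0,1,2); (0,3,4); (1,3,6)];
[:: (0,1,2); (0,3,4); (0,5,6); (1,3,6)];
[:: (0,1,3); (0,2,5); (0,4,6); (1,2,6)];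
[:: (0,1,2); (0,3,4); (0,5,6); (1,3,6)];
[:: (0,1,2); (0,3,4); (1,3,6); (1,4,5)];
[:: (0,1,2); (0,3,4); (0,5,6); (1,3,6)];
[:: (0,1,2); (0,3,4); (1,3,6); (1,4,5)];
[:: (0,1,2); (0,3,4); (0,5,6); (1,3,6); (1,4,5)];
[:: (0,1,2); (0,3,4); (1,3,5)];
[:: (0,1,2); (0,3,4); (0,5,6); (1,3,5)];
[:: (0,1,2); (0,3,4); (1,3,5); (1,4,6)];
[:: (0,1,2); (0,3,4); (0,5,6); (1,3,5)];
[:: (0,1,3); (0,2,5); (1,2,6); (1,4,5)];
[:: (0,1,2); (0,3,4); (0,5,6); (1,3,5)];
[:: (0,1,2); (0,3,4); (1,3,5); (1,4,6)];
[:: (0,1,2); (0,3,4); (0,5,6); (1,3,5); (1,4,6)];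
[:: (0,1,4); (0,2,5); (0,3,6); (1,2,6)];
[:: (0,1,2); (0,3,4); (0,5,6); (1,3,5)];
[:: (0,1,2); (0,3,4); (1,3,5); (1,4,6)];
[:: (0,1,2); (0,3,4); (0,5,6); (1,3,5); (1,4,6)];
[:: (0,1,2); (0,3,4); (1,3,6); (1,4,5)];
[:: (0,1,2); (0,3,4); (0,5,6); (1,3,6); (1,4,5)];
[:: (0,1,2); (0,3,5); (0,4,6); (1,3,6); (1,4,5)];
[:: (0,1,2); (0,3,4); (0,5,6); (1,3,5); (1,4,6)];
[:: (0,1,3); (0,2,4)];
[:: (0,1,2); (0,5,6)];
[:: (0,1,2); (0,4,6)];
[:: (0,1,2); (0,4,6); (1,5,6)];
[:: (0,1,2); (0,4,5)];
[:: (0,1,2); (0,4,5); (1,5,6)];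
[:: (0,1,2); (0,4,5); (1,4,6)];
[:: (0,1,2); (0,4,5); (1,4,6)];
[:: (0,1,2); (0,3,6)];
[:: (0,1,2); (0,3,6); (1,5,6)];
[:: (0,1,2); (0,3,6); (1,4,6)];
[:: (0,1,2); (0,3,6); (1,4,6)];
[:: (0,1,2); (0,3,6); (0,4,5)];
[:: (0,1,2); (0,3,6); (0,4,5)];
[:: (0,1,2); (0,3,6); (0,4,5)];
[:: (0,1,2); (0,3,6); (0,4,5); (1,4,6)];
[:: (0,1,2); (0,3,5)];
[:: (0,1,2); (0,3,5); (1,5,6)];
[:: (0,1,2); (0,3,5); (0,4,6)];
[:: (0,1,2); (0,3,5); (0,4,6)];
[:: (0,1,2); (0,3,5); (1,4,5)];
[:: (0,1,2); (0,3,5); (1,4,5)];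
[:: (0,1,2); (0,3,5); (0,4,6)];
[:: (0,1,2); (0,3,5); (0,4,6); (1,4,5)];
[:: (0,1,2); (0,3,5); (1,3,6)];
[:: (0,1,2); (0,3,5); (1,3,6)];
[:: (0,1,2); (0,3,5); (0,4,6)];
[:: (0,1,2); (0,3,5); (0,4,6); (1,3,6)];
[:: (0,1,2); (0,3,5); (1,3,6)];
[:: (0,1,2); (0,3,5); (1,3,6); (1,4,5)];
[:: (0,1,2); (0,3,5); (0,4,6); (1,3,6)];
[:: (0,1,2); (0,3,5); (0,4,6); (1,3,6)];
[:: (0,1,2); (0,3,4)];
[:: (0,1,2); (0,3,4); (0,5,6)];
[:: (0,1,2); (0,3,4); (1,4,6)];
[:: (0,1,2); (0,3,4); (0,5,6)];
[:: (0,1,2); (0,3,4); (1,4,5)];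
[:: (0,1,2); (0,3,4); (0,5,6)];
[:: (0,1,2); (0,3,4); (1,4,5)];
[:: (0,1,2); (0,3,4); (0,5,6); (1,4,5)];
[:: (0,1,2); (0,3,4); (1,3,6)];
[:: (0,1,2); (0,3,4); (0,5,6)];
[:: (0,1,2); (0,3,4); (1,3,6)];
[:: (0,1,2); (0,3,4); (0,5,6); (1,3,6)];
[:: (0,1,2); (0,3,4); (1,3,6)];
[:: (0,1,2); (0,3,4); (0,5,6); (1,3,6)];
[:: (0,1,2); (0,3,4); (1,3,6); (1,4,5)];
[:: (0,1,2); (0,3,4); (0,5,6); (1,3,6)];
[:: (0,1,2); (0,3,4); (1,3,5)];
[:: (0,1,2); (0,3,4); (0,5,6)];
[:: (0,1,2); (0,3,4); (1,3,5)];
[:: (0,1,2); (0,3,4); (0,5,6); (1,3,5)];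
[:: (0,1,2); (0,3,4); (1,3,5)];
[:: (0,1,2); (0,3,4); (0,5,6); (1,3,5)];
[:: (0,1,2); (0,3,4); (1,3,5); (1,4,6)];
[:: (0,1,2); (0,3,4); (0,5,6); (1,3,5)];
[:: (0,1,2); (0,3,4); (1,3,5)];
[:: (0,1,2); (0,3,4); (0,5,6); (1,3,5)];
[:: (0,1,2); (0,3,4); (1,3,5); (1,4,6)];
[:: (0,1,2); (0,3,4); (0,5,6); (1,3,5)];
[:: (0,1,2); (0,3,4); (1,3,6); (1,4,5)];
[:: (0,1,2); (0,3,4); (0,5,6); (1,3,5)];
[:: (0,1,2); (0,3,4); (1,3,5); (1,4,6)];
[:: (0,1,2); (0,3,4); (0,5,6); (1,3,5); (1,4,6)];
[:: (0,1,3); (0,2,4)];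
[:: (0,1,3); (0,2,4); (0,5,6)];
[:: (0,1,3); (0,2,4); (1,2,6)];
[:: (0,1,2); (0,4,6); (1,5,6)];
[:: (0,1,3); (0,2,4); (1,2,6)];
[:: (0,1,2); (0,4,5); (1,5,6)];
[:: (0,1,2); (0,4,5); (1,4,6)];
[:: (0,1,2); (0,4,5); (1,5,6); (2,4,6)];
[:: (0,1,3); (0,2,4); (1,2,6)];
[:: (0,1,2); (0,3,6); (1,5,6)];
[:: (0,1,2); (0,3,6); (1,4,6)];
[:: (0,1,2); (0,3,6); (1,5,6); (2,4,6)];
[:: (0,1,2); (0,3,6); (0,4,5)];
[:: (0,1,2); (0,3,6); (0,4,5); (1,5,6)];
[:: (0,1,2); (0,3,6); (0,4,5); (1,4,6)];
[:: (0,1,2); (0,3,6); (0,4,5); (1,4,6)];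
[:: (0,1,3); (0,2,4); (1,2,6)];
[:: (0,1,2); (0,3,5); (1,5,6)];
[:: (0,1,2); (0,3,5); (0,4,6)];
[:: (0,1,2); (0,3,5); (0,4,6); (1,5,6)];
[:: (0,1,2); (0,3,5); (1,4,5)];
[:: (0,1,3); (0,2,4); (0,5,6); (1,2,6)];
[:: (0,1,2); (0,3,5); (0,4,6); (1,4,5)];
[:: (0,1,2); (0,3,5); (0,4,6); (1,4,5)];
[:: (0,1,2); (0,3,5); (1,3,6)];
[:: (0,1,3); (0,2,4); (0,5,6); (1,2,6)];
[:: (0,1,2); (0,3,5); (0,4,6); (1,3,6)];
[:: (0,1,2); (0,3,5); (0,4,6); (1,3,6)];
[:: (0,1,2); (0,3,5); (1,3,6); (1,4,5)];
[:: (0,1,2); (0,3,5); (1,3,6); (1,4,5)];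
[:: (0,1,2); (0,3,5); (0,4,6); (1,3,6)];
[:: (0,1,2); (0,3,5); (0,4,6); (1,3,6); (1,4,5)];
[:: (0,1,3); (0,2,4); (1,2,6)];
[:: (0,1,2); (0,3,4); (0,5,6)];
[:: (0,1,2); (0,3,4); (1,4,6)];
[:: (0,1,2); (0,3,4); (0,5,6); (1,4,6)];
[:: (0,1,2); (0,3,4); (1,4,5)];
[:: (0,1,2); (0,3,4); (0,5,6); (1,4,5)];
[:: (0,1,2); (0,3,4); (1,4,5); (2,4,6)];
[:: (0,1,2); (0,3,4); (0,5,6); (1,4,5)];
[:: (0,1,2); (0,3,4); (1,3,6)];
[:: (0,1,2); (0,3,4); (0,5,6); (1,3,6)];
[:: (0,1,2); (0,3,4); (1,3,6); (2,4,6)];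
[:: (0,1,2); (0,3,4); (0,5,6); (1,3,6)];
[:: (0,1,2); (0,3,4); (1,3,6); (1,4,5)];
[:: (0,1,2); (0,3,4); (0,5,6); (1,3,6)];
[:: (0,1,2); (0,3,4); (1,3,6); (1,4,5)];
[:: (0,1,2); (0,3,4); (0,5,6); (1,3,6); (1,4,5)];
[:: (0,1,2); (0,3,4); (1,3,5)];
[:: (0,1,2); (0,3,4); (0,5,6); (1,3,5)];
[:: (0,1,2); (0,3,4); (1,3,5); (1,4,6)];
[:: (0,1,2); (0,3,4); (0,5,6); (1,3,5)];
[:: (0,1,3); (0,2,4); (1,2,6); (1,4,5)];
[:: (0,1,2); (0,3,4); (0,5,6); (1,3,5)];
[:: (0,1,2); (0,3,4); (1,3,5); (1,4,6)];
[:: (0,1,2); (0,3,4); (0,5,6); (1,3,5); (1,4,6)];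
[:: (0,1,4); (0,2,6); (0,3,5); (1,3,6)];
[:: (0,1,2); (0,3,4); (0,5,6); (1,3,5)];
[:: (0,1,2); (0,3,4); (1,3,5); (1,4,6)];
[:: (0,1,2); (0,3,4); (0,5,6); (1,3,5); (1,4,6)];
[:: (0,1,2); (0,3,4); (1,3,6); (1,4,5)];
[:: (0,1,2); (0,3,4); (0,5,6); (1,3,6); (1,4,5)];
[:: (0,1,2); (0,3,4); (1,3,6); (1,4,5); (2,4,6)];
[:: (0,1,2); (0,3,4); (0,5,6); (1,3,5); (1,4,6)];
[:: (0,1,3); (0,2,4)];
[:: (0,1,3); (0,2,4); (0,5,6)];
[:: (0,1,3); (0,2,4); (1,2,5)];
[:: (0,1,2); (0,4,6); (1,5,6)];
[:: (0,1,3); (0,2,4); (1,2,5)];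
[:: (0,1,2); (0,4,5); (1,5,6)];
[:: (0,1,2); (0,4,5); (1,4,6)];
[:: (0,1,2); (0,4,6); (1,5,6); (2,4,5)];
[:: (0,1,3); (0,2,4); (1,2,5)];
[:: (0,1,2); (0,3,6); (1,5,6)];
[:: (0,1,2); (0,3,6); (1,4,6)];
[:: (0,1,3); (0,2,4); (0,5,6); (1,2,5)];
[:: (0,1,2); (0,3,6); (0,4,5)];
[:: (0,1,2); (0,3,6); (0,4,5); (1,5,6)];
[:: (0,1,2); (0,3,6); (0,4,5); (1,4,6)];
[:: (0,1,2); (0,3,6); (0,4,5); (1,4,6)];
[:: (0,1,3); (0,2,4); (1,2,5)];
[:: (0,1,2); (0,3,5); (1,5,6)];
[:: (0,1,2); (0,3,5); (0,4,6)];
[:: (0,1,2); (0,3,5); (0,4,6); (1,5,6)];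
[:: (0,1,2); (0,3,5); (1,4,5)];
[:: (0,1,2); (0,3,5); (1,5,6); (2,4,5)];
[:: (0,1,2); (0,3,5); (0,4,6); (1,4,5)];
[:: (0,1,2); (0,3,5); (0,4,6); (1,4,5)];
[:: (0,1,2); (0,3,5); (1,3,6)];
[:: (0,1,3); (0,2,4); (0,5,6); (1,2,5)];
[:: (0,1,2); (0,3,5); (0,4,6); (1,3,6)];
[:: (0,1,2); (0,3,5); (0,4,6); (1,3,6)];
[:: (0,1,2); (0,3,5); (1,3,6); (1,4,5)];
[:: (0,1,2); (0,3,5); (1,3,6); (1,4,5)];
[:: (0,1,2); (0,3,5); (0,4,6); (1,3,6)];
[:: (0,1,2); (0,3,5); (0,4,6); (1,3,6); (1,4,5)];
[:: (0,1,3); (0,2,4); (1,2,5)];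
[:: (0,1,2); (0,3,4); (0,5,6)];
[:: (0,1,2); (0,3,4); (1,4,6)];
[:: (0,1,2); (0,3,4); (0,5,6); (1,4,6)];
[:: (0,1,2); (0,3,4); (1,4,5)];
[:: (0,1,2); (0,3,4); (0,5,6); (1,4,5)];
[:: (0,1,2); (0,3,4); (1,4,6); (2,4,5)];
[:: (0,1,2); (0,3,4); (0,5,6); (1,4,5)];
[:: (0,1,2); (0,3,4); (1,3,6)];
[:: (0,1,2); (0,3,4); (0,5,6); (1,3,6)];
[:: (0,1,3); (0,2,4); (1,2,5); (1,4,6)];
[:: (0,1,2); (0,3,4); (0,5,6); (1,3,6)];
[:: (0,1,2); (0,3,4); (1,3,6); (1,4,5)];
[:: (0,1,2); (0,3,4); (0,5,6); (1,3,6)];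
[:: (0,1,2); (0,3,4); (1,3,6); (1,4,5)];
[:: (0,1,2); (0,3,4); (0,5,6); (1,3,6); (1,4,5)];
[:: (0,1,2); (0,3,4); (1,3,5)];
[:: (0,1,2); (0,3,4); (0,5,6); (1,3,5)];
[:: (0,1,2); (0,3,4); (1,3,5); (1,4,6)];
[:: (0,1,2); (0,3,4); (0,5,6); (1,3,5)];
[:: (0,1,2); (0,3,4); (1,3,5); (2,4,5)];
[:: (0,1,2); (0,3,4); (0,5,6); (1,3,5)];
[:: (0,1,2); (0,3,4); (1,3,5); (1,4,6)];
[:: (0,1,2); (0,3,4); (0,5,6); (1,3,5); (1,4,6)];
[:: (0,1,4); (0,2,5); (0,3,6); (1,3,5)];
[:: (0,1,2); (0,3,4); (0,5,6); (1,3,5)];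
[:: (0,1,2); (0,3,4); (1,3,5); (1,4,6)];
[:: (0,1,2); (0,3,4); (0,5,6); (1,3,5); (1,4,6)];
[:: (0,1,2); (0,3,4); (1,3,5); (2,4,5)];
[:: (0,1,2); (0,3,4); (0,5,6); (1,3,5); (2,4,5)];
[:: (0,1,2); (0,3,4); (1,3,5); (1,4,6); (2,4,5)];
[:: (0,1,2); (0,3,4); (0,5,6); (1,3,5); (1,4,6)];
[:: (0,1,3); (0,2,4); (1,2,5)];
[:: (0,1,3); (0,2,4); (0,5,6)];
[:: (0,1,3); (0,2,4); (1,2,5)];
[:: (0,1,3); (0,2,4); (0,5,6); (1,2,5)];
[:: (0,1,3); (0,2,4); (1,2,5)];
[:: (0,1,3); (0,2,4); (0,5,6); (1,2,5)];
[:: (0,1,3); (0,2,4); (1,2,5); (1,4,6)];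
[:: (0,1,2); (0,4,5); (1,4,6); (2,5,6)];
[:: (0,1,3); (0,2,4); (1,2,5)];
[:: (0,1,3); (0,2,4); (0,5,6); (1,2,5)];
[:: (0,1,3); (0,2,4); (1,2,5); (1,4,6)];
[:: (0,1,2); (0,3,6); (1,4,6); (2,5,6)];
[:: (0,1,3); (0,2,4); (1,2,6); (1,4,5)];
[:: (0,1,2); (0,3,6); (0,4,5); (1,5,6)];
[:: (0,1,2); (0,3,6); (0,4,5); (1,4,6)];
[:: (0,1,2); (0,3,6); (0,4,5); (1,4,6); (2,5,6)];
[:: (0,1,3); (0,2,4); (1,2,5)];
[:: (0,1,3); (0,2,4); (0,5,6); (1,2,5)];
[:: (0,1,3); (0,2,4); (1,2,5); (1,4,6)];
[:: (0,1,2); (0,3,5); (0,4,6); (1,5,6)];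
[:: (0,1,3); (0,2,4); (1,2,6); (1,4,5)];
[:: (0,1,2); (0,3,5); (1,4,5); (2,5,6)];
[:: (0,1,2); (0,3,5); (0,4,6); (1,4,5)];
[:: (0,1,2); (0,3,5); (0,4,6); (1,4,5); (2,5,6)];
[:: (0,1,4); (0,2,5); (0,3,6); (1,2,6)];
[:: (0,1,2); (0,3,5); (1,3,6); (2,5,6)];
[:: (0,1,2); (0,3,5); (0,4,6); (1,3,6)];
[:: (0,1,2); (0,3,5); (0,4,6); (1,3,6); (2,5,6)];
[:: (0,1,2); (0,3,5); (1,3,6); (1,4,5)];
[:: (0,1,2); (0,3,5); (1,3,6); (1,4,5); (2,5,6)];
[:: (0,1,2); (0,3,5); (0,4,6); (1,3,6); (1,4,5)];
[:: (0,1,2); (0,3,5); (0,4,6); (1,3,6); (1,4,5)];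
[:: (0,1,3); (0,2,4); (1,2,5)];
[:: (0,1,3); (0,2,4); (0,5,6); (1,2,5)];
[:: (0,1,3); (0,2,4); (1,2,5); (1,4,6)];
[:: (0,1,2); (0,3,4); (0,5,6); (1,4,6)];
[:: (0,1,3); (0,2,4); (1,2,6); (1,4,5)];
[:: (0,1,2); (0,3,4); (0,5,6); (1,4,5)];
[:: (0,1,2); (0,3,4); (1,4,5); (2,4,6)];
[:: (0,1,2); (0,3,4); (0,5,6); (1,4,5); (2,4,6)];
[:: (0,1,4); (0,2,5); (0,3,6); (1,2,6)];
[:: (0,1,2); (0,3,4); (0,5,6); (1,3,6)];
[:: (0,1,2); (0,3,4); (1,3,6); (2,4,6)];
[:: (0,1,2); (0,3,4); (0,5,6); (1,3,6); (2,4,6)];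
[:: (0,1,2); (0,3,4); (1,3,6); (1,4,5)];
[:: (0,1,2); (0,3,4); (0,5,6); (1,3,6); (1,4,5)];
[:: (0,1,2); (0,3,4); (1,3,6); (1,4,5); (2,4,6)];
[:: (0,1,2); (0,3,4); (0,5,6); (1,3,6); (1,4,5)];
[:: (0,1,4); (0,2,5); (1,2,6); (1,3,5)];
[:: (0,1,2); (0,3,4); (0,5,6); (1,3,5)];
[:: (0,1,2); (0,3,4); (1,3,5); (1,4,6)];
[:: (0,1,2); (0,3,4); (0,5,6); (1,3,5); (1,4,6)];
[:: (0,1,2); (0,3,4); (1,3,5); (2,4,5)];
[:: (0,1,2); (0,3,4); (0,5,6); (1,3,5); (2,4,5)];
[:: (0,1,2); (0,3,4); (1,3,5); (1,4,6); (2,4,5)];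
[:: (0,1,2); (0,3,4); (0,5,6); (1,3,5); (1,4,6)];
[:: (0,1,4); (0,2,5); (0,3,6); (1,2,6)];
[:: (0,1,4); (0,2,5); (0,3,6); (1,2,6); (1,3,5)];
[:: (0,1,4); (0,2,5); (0,3,6); (1,2,6); (1,3,5)];
[:: (0,1,2); (0,3,4); (0,5,6); (1,3,5); (1,4,6)];
[:: (0,1,4); (0,2,5); (0,3,6); (1,2,6); (1,3,5)];
[:: (0,1,2); (0,3,4); (0,5,6); (1,3,5); (2,4,5)];
[:: (0,1,2); (0,3,4); (1,3,5); (1,4,6); (2,4,5)];
[:: (0,1,2); (0,3,4); (0,5,6); (1,3,5); (1,4,6); (2,4,5)];
[:: (0,1,4); (0,2,3)];
[:: (0,1,2); (0,5,6)];
[:: (0,1,2); (0,4,6)];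
[:: (0,1,2); (0,4,6); (1,5,6)];
[:: (0,1,2); (0,4,5)];
[:: (0,1,2); (0,4,5); (1,5,6)];
[:: (0,1,2); (0,4,5); (1,4,6)];
[:: (0,1,2); (0,4,5); (1,4,6)];
[:: (0,1,2); (0,3,6)];
[:: (0,1,2); (0,3,6); (1,5,6)];
[:: (0,1,2); (0,3,6); (1,4,6)];
[:: (0,1,2); (0,3,6); (1,4,6)];
[:: (0,1,2); (0,3,6); (0,4,5)];
[:: (0,1,2); (0,3,6); (0,4,5)];
[:: (0,1,2); (0,3,6); (0,4,5)];
[:: (0,1,2); (0,3,6); (0,4,5); (1,4,6)];
[:: (0,1,2); (0,3,5)];
[:: (0,1,2); (0,3,5); (1,5,6)];
[:: (0,1,2); (0,3,5); (0,4,6)];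
[:: (0,1,2); (0,3,5); (0,4,6)];
[:: (0,1,2); (0,3,5); (1,4,5)];
[:: (0,1,2); (0,3,5); (1,4,5)];
[:: (0,1,2); (0,3,5); (0,4,6)];
[:: (0,1,2); (0,3,5); (0,4,6); (1,4,5)];
[:: (0,1,2); (0,3,5); (1,3,6)];
[:: (0,1,2); (0,3,5); (1,3,6)];
[:: (0,1,2); (0,3,5); (0,4,6)];
[:: (0,1,2); (0,3,5); (0,4,6); (1,3,6)];
[:: (0,1,2); (0,3,5); (1,3,6)];
[:: (0,1,2); (0,3,5); (1,3,6); (1,4,5)];
[:: (0,1,2); (0,3,5); (0,4,6); (1,3,6)];
[:: (0,1,2); (0,3,5); (0,4,6); (1,3,6)];
[:: (0,1,2); (0,3,4)];
[:: (0,1,2); (0,3,4); (0,5,6)];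
[:: (0,1,2); (0,3,4); (1,4,6)];
[:: (0,1,2); (0,3,4); (0,5,6)];
[:: (0,1,2); (0,3,4); (1,4,5)];
[:: (0,1,2); (0,3,4); (0,5,6)];
[:: (0,1,2); (0,3,4); (1,4,5)];
[:: (0,1,2); (0,3,4); (0,5,6); (1,4,5)];
[:: (0,1,2); (0,3,4); (1,3,6)];
[:: (0,1,2); (0,3,4); (0,5,6)];
[:: (0,1,2); (0,3,4); (1,3,6)];
[:: (0,1,2); (0,3,4); (0,5,6); (1,3,6)];
[:: (0,1,2); (0,3,4); (1,3,6)];
[:: (0,1,2); (0,3,4); (0,5,6); (1,3,6)];
[:: (0,1,2); (0,3,4); (1,3,6); (1,4,5)];
[:: (0,1,2); (0,3,4); (0,5,6); (1,3,6)];
[:: (0,1,2); (0,3,4); (1,3,5)];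
[:: (0,1,2); (0,3,4); (0,5,6)];
[:: (0,1,2); (0,3,4); (1,3,5)];
[:: (0,1,2); (0,3,4); (0,5,6); (1,3,5)];
[:: (0,1,2); (0,3,4); (1,3,5)];
[:: (0,1,2); (0,3,4); (0,5,6); (1,3,5)];
[:: (0,1,2); (0,3,4); (1,3,5); (1,4,6)];
[:: (0,1,2); (0,3,4); (0,5,6); (1,3,5)];
[:: (0,1,2); (0,3,4); (1,3,5)];
[:: (0,1,2); (0,3,4); (0,5,6); (1,3,5)];
[:: (0,1,2); (0,3,4); (1,3,5); (1,4,6)];
[:: (0,1,2); (0,3,4); (0,5,6); (1,3,5)];
[:: (0,1,2); (0,3,4); (1,3,6); (1,4,5)];
[:: (0,1,2); (0,3,4); (0,5,6); (1,3,5)];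
[:: (0,1,2); (0,3,4); (1,3,5); (1,4,6)];
[:: (0,1,2); (0,3,4); (0,5,6); (1,3,5); (1,4,6)];
[:: (0,1,3); (0,2,6)];
[:: (0,1,3); (0,2,6); (1,5,6)];
[:: (0,1,3); (0,2,6); (1,4,6)];
[:: (0,1,2); (0,4,6); (1,5,6)];
[:: (0,1,3); (0,2,6); (0,4,5)];
[:: (0,1,2); (0,4,5); (1,5,6)];
[:: (0,1,2); (0,4,5); (1,4,6)];
[:: (0,1,3); (0,2,6); (0,4,5); (1,4,6)];
[:: (0,1,4); (0,2,3); (1,2,6)];
[:: (0,1,2); (0,3,6); (1,5,6)];
[:: (0,1,2); (0,3,6); (1,4,6)];
[:: (0,1,2); (0,4,6); (1,5,6); (2,3,6)];
[:: (0,1,2); (0,3,6); (0,4,5)];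
[:: (0,1,2); (0,3,6); (0,4,5); (1,5,6)];
[:: (0,1,2); (0,3,6); (0,4,5); (1,4,6)];
[:: (0,1,2); (0,3,6); (0,4,5); (1,4,6)];
[:: (0,1,4); (0,2,3); (1,2,6)];
[:: (0,1,2); (0,3,5); (1,5,6)];
[:: (0,1,2); (0,3,5); (0,4,6)];
[:: (0,1,2); (0,3,5); (0,4,6); (1,5,6)];
[:: (0,1,2); (0,3,5); (1,4,5)];
[:: (0,1,3); (0,2,6); (0,4,5); (1,5,6)];
[:: (0,1,2); (0,3,5); (0,4,6); (1,4,5)];
[:: (0,1,2); (0,3,5); (0,4,6); (1,4,5)];
[:: (0,1,2); (0,3,5); (1,3,6)];
[:: (0,1,2); (0,3,5); (1,5,6); (2,3,6)];
[:: (0,1,2); (0,3,5); (0,4,6); (1,3,6)];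
[:: (0,1,2); (0,3,5); (0,4,6); (1,3,6)];
[:: (0,1,2); (0,3,5); (1,3,6); (1,4,5)];
[:: (0,1,2); (0,3,5); (1,3,6); (1,4,5)];
[:: (0,1,2); (0,3,5); (0,4,6); (1,3,6)];
[:: (0,1,2); (0,3,5); (0,4,6); (1,3,6); (1,4,5)];
[:: (0,1,4); (0,2,3); (1,2,6)];
[:: (0,1,2); (0,3,4); (0,5,6)];
[:: (0,1,2); (0,3,4); (1,4,6)];
[:: (0,1,2); (0,3,4); (0,5,6); (1,4,6)];
[:: (0,1,2); (0,3,4); (1,4,5)];
[:: (0,1,2); (0,3,4); (0,5,6); (1,4,5)];
[:: (0,1,3); (0,2,6); (0,4,5); (1,4,6)];
[:: (0,1,2); (0,3,4); (0,5,6); (1,4,5)];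
[:: (0,1,2); (0,3,4); (1,3,6)];
[:: (0,1,2); (0,3,4); (0,5,6); (1,3,6)];
[:: (0,1,2); (0,3,4); (1,4,6); (2,3,6)];
[:: (0,1,2); (0,3,4); (0,5,6); (1,3,6)];
[:: (0,1,2); (0,3,4); (1,3,6); (1,4,5)];
[:: (0,1,2); (0,3,4); (0,5,6); (1,3,6)];
[:: (0,1,2); (0,3,4); (1,3,6); (1,4,5)];
[:: (0,1,2); (0,3,4); (0,5,6); (1,3,6); (1,4,5)];
[:: (0,1,2); (0,3,4); (1,3,5)];
[:: (0,1,2); (0,3,4); (0,5,6); (1,3,5)];
[:: (0,1,2); (0,3,4); (1,3,5); (1,4,6)];
[:: (0,1,2); (0,3,4); (0,5,6); (1,3,5)];
[:: (0,1,4); (0,2,3); (1,2,6); (1,3,5)];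
[:: (0,1,2); (0,3,4); (0,5,6); (1,3,5)];
[:: (0,1,2); (0,3,4); (1,3,5); (1,4,6)];
[:: (0,1,2); (0,3,4); (0,5,6); (1,3,5); (1,4,6)];
[:: (0,1,2); (0,3,4); (1,3,5); (2,3,6)];
[:: (0,1,2); (0,3,4); (0,5,6); (1,3,5)];
[:: (0,1,2); (0,3,4); (1,3,5); (1,4,6)];
[:: (0,1,2); (0,3,4); (0,5,6); (1,3,5); (1,4,6)];
[:: (0,1,2); (0,3,4); (1,3,5); (2,3,6)];
[:: (0,1,2); (0,3,4); (0,5,6); (1,3,5); (2,3,6)];
[:: (0,1,2); (0,3,4); (1,3,5); (1,4,6); (2,3,6)];
[:: (0,1,2); (0,3,4); (0,5,6); (1,3,5); (1,4,6)];
[:: (0,1,3); (0,2,5)];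
[:: (0,1,3); (0,2,5); (1,5,6)];
[:: (0,1,3); (0,2,5); (0,4,6)];
[:: (0,1,2); (0,4,6); (1,5,6)];
[:: (0,1,3); (0,2,5); (1,4,5)];
[:: (0,1,2); (0,4,5); (1,5,6)];
[:: (0,1,2); (0,4,5); (1,4,6)];
[:: (0,1,3); (0,2,5); (0,4,6); (1,4,5)];
[:: (0,1,4); (0,2,3); (1,2,5)];
[:: (0,1,2); (0,3,6); (1,5,6)];
[:: (0,1,2); (0,3,6); (1,4,6)];
[:: (0,1,3); (0,2,5); (0,4,6); (1,5,6)];
[:: (0,1,2); (0,3,6); (0,4,5)];
[:: (0,1,2); (0,3,6); (0,4,5); (1,5,6)];
[:: (0,1,2); (0,3,6); (0,4,5); (1,4,6)];
[:: (0,1,2); (0,3,6); (0,4,5); (1,4,6)];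
[:: (0,1,4); (0,2,3); (1,2,5)];
[:: (0,1,2); (0,3,5); (1,5,6)];
[:: (0,1,2); (0,3,5); (0,4,6)];
[:: (0,1,2); (0,3,5); (0,4,6); (1,5,6)];
[:: (0,1,2); (0,3,5); (1,4,5)];
[:: (0,1,2); (0,4,5); (1,5,6); (2,3,5)];
[:: (0,1,2); (0,3,5); (0,4,6); (1,4,5)];
[:: (0,1,2); (0,3,5); (0,4,6); (1,4,5)];
[:: (0,1,2); (0,3,5); (1,3,6)];
[:: (0,1,2); (0,3,6); (1,5,6); (2,3,5)];
[:: (0,1,2); (0,3,5); (0,4,6); (1,3,6)];
[:: (0,1,2); (0,3,5); (0,4,6); (1,3,6)];
[:: (0,1,2); (0,3,5); (1,3,6); (1,4,5)];
[:: (0,1,2); (0,3,5); (1,3,6); (1,4,5)];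
[:: (0,1,2); (0,3,5); (0,4,6); (1,3,6)];
[:: (0,1,2); (0,3,5); (0,4,6); (1,3,6); (1,4,5)];
[:: (0,1,4); (0,2,3); (1,2,5)];
[:: (0,1,2); (0,3,4); (0,5,6)];
[:: (0,1,2); (0,3,4); (1,4,6)];
[:: (0,1,2); (0,3,4); (0,5,6); (1,4,6)];
[:: (0,1,2); (0,3,4); (1,4,5)];
[:: (0,1,2); (0,3,4); (0,5,6); (1,4,5)];
[:: (0,1,3); (0,2,5); (0,4,6); (1,4,5)];
[:: (0,1,2); (0,3,4); (0,5,6); (1,4,5)];
[:: (0,1,2); (0,3,4); (1,3,6)];
[:: (0,1,2); (0,3,4); (0,5,6); (1,3,6)];
[:: (0,1,4); (0,2,3); (1,2,5); (1,3,6)];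
[:: (0,1,2); (0,3,4); (0,5,6); (1,3,6)];
[:: (0,1,2); (0,3,4); (1,3,6); (1,4,5)];
[:: (0,1,2); (0,3,4); (0,5,6); (1,3,6)];
[:: (0,1,2); (0,3,4); (1,3,6); (1,4,5)];
[:: (0,1,2); (0,3,4); (0,5,6); (1,3,6); (1,4,5)];
[:: (0,1,2); (0,3,4); (1,3,5)];
[:: (0,1,2); (0,3,4); (0,5,6); (1,3,5)];
[:: (0,1,2); (0,3,4); (1,3,5); (1,4,6)];
[:: (0,1,2); (0,3,4); (0,5,6); (1,3,5)];
[:: (0,1,2); (0,3,4); (1,4,5); (2,3,5)];
[:: (0,1,2); (0,3,4); (0,5,6); (1,3,5)];
[:: (0,1,2); (0,3,4); (1,3,5); (1,4,6)];
[:: (0,1,2); (0,3,4); (0,5,6); (1,3,5); (1,4,6)];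
[:: (0,1,2); (0,3,4); (1,3,6); (2,3,5)];
[:: (0,1,2); (0,3,4); (0,5,6); (1,3,5)];
[:: (0,1,2); (0,3,4); (1,3,5); (1,4,6)];
[:: (0,1,2); (0,3,4); (0,5,6); (1,3,5); (1,4,6)];
[:: (0,1,2); (0,3,4); (1,3,6); (1,4,5)];
[:: (0,1,2); (0,3,4); (0,5,6); (1,3,6); (1,4,5)];
[:: (0,1,2); (0,3,4); (1,3,6); (1,4,5); (2,3,5)];
[:: (0,1,2); (0,3,4); (0,5,6); (1,3,5); (1,4,6)];
[:: (0,1,3); (0,2,5); (1,2,6)];
[:: (0,1,3); (0,2,5); (1,2,6)];
[:: (0,1,3); (0,2,5); (0,4,6)];
[:: (0,1,3); (0,2,5); (0,4,6); (1,2,6)];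
[:: (0,1,3); (0,2,5); (1,2,6)];
[:: (0,1,3); (0,2,5); (1,2,6); (1,4,5)];
[:: (0,1,3); (0,2,5); (0,4,6); (1,2,6)];
[:: (0,1,2); (0,4,5); (1,4,6); (2,5,6)];
[:: (0,1,3); (0,2,5); (1,2,6)];
[:: (0,1,3); (0,2,5); (1,5,6); (2,3,6)];
[:: (0,1,3); (0,2,5); (0,4,6); (1,2,6)];
[:: (0,1,2); (0,3,6); (1,4,6); (2,5,6)];
[:: (0,1,3); (0,2,5); (1,2,6); (1,4,5)];
[:: (0,1,2); (0,3,6); (0,4,5); (1,5,6)];
[:: (0,1,2); (0,3,6); (0,4,5); (1,4,6)];
[:: (0,1,2); (0,3,6); (0,4,5); (1,4,6); (2,5,6)];
[:: (0,1,3); (0,2,5); (1,2,6)];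
[:: (0,1,3); (0,2,6); (1,5,6); (2,3,5)];
[:: (0,1,3); (0,2,5); (0,4,6); (1,2,6)];
[:: (0,1,2); (0,3,5); (0,4,6); (1,5,6)];
[:: (0,1,3); (0,2,5); (1,2,6); (1,4,5)];
[:: (0,1,2); (0,3,5); (1,4,5); (2,5,6)];
[:: (0,1,2); (0,3,5); (0,4,6); (1,4,5)];
[:: (0,1,2); (0,3,5); (0,4,6); (1,4,5); (2,5,6)];
[:: (0,1,4); (0,2,3); (1,2,5); (1,3,6)];
[:: (0,1,2); (0,3,5); (1,3,6); (2,5,6)];
[:: (0,1,2); (0,3,5); (0,4,6); (1,3,6)];
[:: (0,1,2); (0,3,5); (0,4,6); (1,3,6); (2,5,6)];
[:: (0,1,2); (0,3,5); (1,3,6); (1,4,5)];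
[:: (0,1,2); (0,3,5); (1,3,6); (1,4,5); (2,5,6)];
[:: (0,1,2); (0,3,5); (0,4,6); (1,3,6); (1,4,5)];
[:: (0,1,2); (0,3,5); (0,4,6); (1,3,6); (1,4,5)];
[:: (0,1,3); (0,2,5); (1,2,6)];
[:: (0,1,4); (0,2,3); (0,5,6); (1,2,5)];
[:: (0,1,3); (0,2,5); (0,4,6); (1,2,6)];
[:: (0,1,2); (0,3,4); (0,5,6); (1,4,6)];
[:: (0,1,3); (0,2,5); (1,2,6); (1,4,5)];
[:: (0,1,2); (0,3,4); (0,5,6); (1,4,5)];
[:: (0,1,3); (0,2,5); (0,4,6); (1,2,6)];
[:: (0,1,3); (0,2,5); (0,4,6); (1,2,6); (1,4,5)];
[:: (0,1,4); (0,2,3); (1,2,5); (1,3,6)];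
[:: (0,1,2); (0,3,4); (0,5,6); (1,3,6)];
[:: (0,1,2); (0,3,4); (1,4,6); (2,3,6)];
[:: (0,1,2); (0,3,4); (0,5,6); (1,4,6); (2,3,6)];
[:: (0,1,2); (0,3,4); (1,3,6); (1,4,5)];
[:: (0,1,2); (0,3,4); (0,5,6); (1,3,6); (1,4,5)];
[:: (0,1,3); (0,2,5); (0,4,6); (1,2,6); (1,4,5)];
[:: (0,1,2); (0,3,4); (0,5,6); (1,3,6); (1,4,5)];
[:: (0,1,4); (0,2,3); (1,2,6); (1,3,5)];
[:: (0,1,2); (0,3,4); (0,5,6); (1,3,5)];
[:: (0,1,2); (0,3,4); (1,3,5); (1,4,6)];
[:: (0,1,2); (0,3,4); (0,5,6); (1,3,5); (1,4,6)];
[:: (0,1,2); (0,3,4); (1,4,5); (2,3,5)];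
[:: (0,1,2); (0,3,4); (0,5,6); (1,4,5); (2,3,5)];
[:: (0,1,3); (0,2,5); (0,4,6); (1,2,6); (1,4,5)];
[:: (0,1,2); (0,3,4); (0,5,6); (1,3,5); (1,4,6)];
[:: (0,1,2); (0,3,4); (1,3,5); (2,3,6)];
[:: (0,1,2); (0,3,4); (0,5,6); (1,3,5); (2,3,6)];
[:: (0,1,2); (0,3,4); (1,3,5); (1,4,6); (2,3,6)];
[:: (0,1,2); (0,3,4); (0,5,6); (1,3,5); (1,4,6)];
[:: (0,1,2); (0,3,4); (1,3,6); (1,4,5); (2,3,5)];
[:: (0,1,2); (0,3,4); (0,5,6); (1,3,5); (2,3,6)];
[:: (0,1,2); (0,3,4); (1,3,5); (1,4,6); (2,3,6)];
[:: (0,1,2); (0,3,4); (0,5,6); (1,3,5); (1,4,6); (2,3,6)];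
[:: (0,1,3); (0,2,4)];
[:: (0,1,3); (0,2,4); (0,5,6)];
[:: (0,1,3); (0,2,4); (1,4,6)];
[:: (0,1,2); (0,4,6); (1,5,6)];
[:: (0,1,3); (0,2,4); (1,4,5)];
[:: (0,1,2); (0,4,5); (1,5,6)];
[:: (0,1,2); (0,4,5); (1,4,6)];
[:: (0,1,3); (0,2,4); (0,5,6); (1,4,5)];
[:: (0,1,4); (0,2,3); (1,3,6)];
[:: (0,1,2); (0,3,6); (1,5,6)];
[:: (0,1,2); (0,3,6); (1,4,6)];
[:: (0,1,3); (0,2,4); (0,5,6); (1,4,6)];
[:: (0,1,2); (0,3,6); (0,4,5)];
[:: (0,1,2); (0,3,6); (0,4,5); (1,5,6)];
[:: (0,1,2); (0,3,6); (0,4,5); (1,4,6)];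
[:: (0,1,2); (0,3,6); (0,4,5); (1,4,6)];
[:: (0,1,4); (0,2,3); (1,3,5)];
[:: (0,1,2); (0,3,5); (1,5,6)];
[:: (0,1,2); (0,3,5); (0,4,6)];
[:: (0,1,2); (0,3,5); (0,4,6); (1,5,6)];
[:: (0,1,2); (0,3,5); (1,4,5)];
[:: (0,1,3); (0,2,4); (0,5,6); (1,4,5)];
[:: (0,1,2); (0,3,5); (0,4,6); (1,4,5)];
[:: (0,1,2); (0,3,5); (0,4,6); (1,4,5)];
[:: (0,1,2); (0,3,5); (1,3,6)];
[:: (0,1,4); (0,2,3); (0,5,6); (1,3,5)];
[:: (0,1,2); (0,3,5); (0,4,6); (1,3,6)];
[:: (0,1,2); (0,3,5); (0,4,6); (1,3,6)];
[:: (0,1,2); (0,3,5); (1,3,6); (1,4,5)];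
[:: (0,1,2); (0,3,5); (1,3,6); (1,4,5)];
[:: (0,1,2); (0,3,5); (0,4,6); (1,3,6)];
[:: (0,1,2); (0,3,5); (0,4,6); (1,3,6); (1,4,5)];
[:: (0,1,5); (0,2,3); (1,2,4)];
[:: (0,1,2); (0,3,4); (0,5,6)];
[:: (0,1,2); (0,3,4); (1,4,6)];
[:: (0,1,2); (0,3,4); (0,5,6); (1,4,6)];
[:: (0,1,2); (0,3,4); (1,4,5)];
[:: (0,1,2); (0,3,4); (0,5,6); (1,4,5)];
[:: (0,1,2); (0,4,5); (1,4,6); (2,3,4)];
[:: (0,1,2); (0,3,4); (0,5,6); (1,4,5)];
[:: (0,1,2); (0,3,4); (1,3,6)];
[:: (0,1,2); (0,3,4); (0,5,6); (1,3,6)];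
[:: (0,1,2); (0,3,6); (1,4,6); (2,3,4)];
[:: (0,1,2); (0,3,4); (0,5,6); (1,3,6)];
[:: (0,1,2); (0,3,4); (1,3,6); (1,4,5)];
[:: (0,1,2); (0,3,4); (0,5,6); (1,3,6)];
[:: (0,1,2); (0,3,4); (1,3,6); (1,4,5)];
[:: (0,1,2); (0,3,4); (0,5,6); (1,3,6); (1,4,5)];
[:: (0,1,2); (0,3,4); (1,3,5)];
[:: (0,1,2); (0,3,4); (0,5,6); (1,3,5)];
[:: (0,1,2); (0,3,4); (1,3,5); (1,4,6)];
[:: (0,1,2); (0,3,4); (0,5,6); (1,3,5)];
[:: (0,1,2); (0,3,5); (1,4,5); (2,3,4)];
[:: (0,1,2); (0,3,4); (0,5,6); (1,3,5)];
[:: (0,1,2); (0,3,4); (1,3,5); (1,4,6)];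
[:: (0,1,2); (0,3,4); (0,5,6); (1,3,5); (1,4,6)];
[:: (0,1,2); (0,3,5); (1,3,6); (2,3,4)];
[:: (0,1,2); (0,3,4); (0,5,6); (1,3,5)];
[:: (0,1,2); (0,3,4); (1,3,5); (1,4,6)];
[:: (0,1,2); (0,3,4); (0,5,6); (1,3,5); (1,4,6)];
[:: (0,1,2); (0,3,4); (1,3,6); (1,4,5)];
[:: (0,1,2); (0,3,4); (0,5,6); (1,3,6); (1,4,5)];
[:: (0,1,2); (0,3,5); (0,4,6); (1,3,6); (1,4,5)];
[:: (0,1,2); (0,3,4); (0,5,6); (1,3,5); (1,4,6)];
[:: (0,1,3); (0,2,4); (1,2,6)];
[:: (0,1,3); (0,2,4); (0,5,6)];
[:: (0,1,3); (0,2,4); (1,2,6)];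
[:: (0,1,3); (0,2,4); (0,5,6); (1,2,6)];
[:: (0,1,3); (0,2,4); (1,2,6)];
[:: (0,1,3); (0,2,4); (0,5,6); (1,2,6)];
[:: (0,1,3); (0,2,4); (1,2,6); (1,4,5)];
[:: (0,1,2); (0,4,5); (1,5,6); (2,4,6)];
[:: (0,1,3); (0,2,4); (1,2,6)];
[:: (0,1,3); (0,2,4); (0,5,6); (1,2,6)];
[:: (0,1,3); (0,2,4); (1,4,6); (2,3,6)];
[:: (0,1,2); (0,3,6); (1,5,6); (2,4,6)];
[:: (0,1,3); (0,2,4); (1,2,6); (1,4,5)];
[:: (0,1,2); (0,3,6); (0,4,5); (1,5,6)];
[:: (0,1,2); (0,3,6); (0,4,5); (1,4,6)];
[:: (0,1,2); (0,3,6); (0,4,5); (1,5,6); (2,4,6)];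
[:: (0,1,3); (0,2,4); (1,2,6)];
[:: (0,1,3); (0,2,4); (0,5,6); (1,2,6)];
[:: (0,1,4); (0,2,3); (1,2,6); (1,3,5)];
[:: (0,1,2); (0,3,5); (0,4,6); (1,5,6)];
[:: (0,1,3); (0,2,4); (1,2,6); (1,4,5)];
[:: (0,1,3); (0,2,4); (0,5,6); (1,2,6)];
[:: (0,1,2); (0,3,5); (0,4,6); (1,4,5)];
[:: (0,1,3); (0,2,4); (0,5,6); (1,2,6); (1,4,5)];
[:: (0,1,4); (0,2,3); (1,2,6); (1,3,5)];
[:: (0,1,2); (0,3,5); (1,5,6); (2,3,6)];
[:: (0,1,2); (0,3,5); (0,4,6); (1,3,6)];
[:: (0,1,2); (0,3,5); (0,4,6); (1,5,6); (2,3,6)];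
[:: (0,1,2); (0,3,5); (1,3,6); (1,4,5)];
[:: (0,1,3); (0,2,4); (0,5,6); (1,2,6); (1,4,5)];
[:: (0,1,2); (0,3,5); (0,4,6); (1,3,6); (1,4,5)];
[:: (0,1,2); (0,3,5); (0,4,6); (1,3,6); (1,4,5)];
[:: (0,1,3); (0,2,4); (1,2,6)];
[:: (0,1,3); (0,2,4); (0,5,6); (1,2,6)];
[:: (0,1,3); (0,2,6); (1,4,6); (2,3,4)];
[:: (0,1,2); (0,3,4); (0,5,6); (1,4,6)];
[:: (0,1,3); (0,2,4); (1,2,6); (1,4,5)];
[:: (0,1,2); (0,3,4); (0,5,6); (1,4,5)];
[:: (0,1,2); (0,3,4); (1,4,5); (2,4,6)];
[:: (0,1,2); (0,3,4); (0,5,6); (1,4,5); (2,4,6)];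
[:: (0,1,4); (0,2,6); (1,3,6); (2,3,4)];
[:: (0,1,2); (0,3,4); (0,5,6); (1,3,6)];
[:: (0,1,2); (0,3,4); (1,3,6); (2,4,6)];
[:: (0,1,2); (0,3,4); (0,5,6); (1,3,6); (2,4,6)];
[:: (0,1,2); (0,3,4); (1,3,6); (1,4,5)];
[:: (0,1,2); (0,3,4); (0,5,6); (1,3,6); (1,4,5)];
[:: (0,1,2); (0,3,4); (1,3,6); (1,4,5); (2,4,6)];
[:: (0,1,2); (0,3,4); (0,5,6); (1,3,6); (1,4,5)];
[:: (0,1,4); (0,2,3); (1,2,6); (1,3,5)];
[:: (0,1,2); (0,3,4); (0,5,6); (1,3,5)];
[:: (0,1,2); (0,3,4); (1,3,5); (1,4,6)];
[:: (0,1,2); (0,3,4); (0,5,6); (1,3,5); (1,4,6)];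
[:: (0,1,2); (0,3,5); (1,4,5); (2,3,4)];
[:: (0,1,3); (0,2,4); (0,5,6); (1,2,6); (1,4,5)];
[:: (0,1,2); (0,3,5); (0,4,6); (1,4,5); (2,3,4)];
[:: (0,1,2); (0,3,4); (0,5,6); (1,3,5); (1,4,6)];
[:: (0,1,2); (0,3,4); (1,3,5); (2,3,6)];
[:: (0,1,2); (0,3,4); (0,5,6); (1,3,5); (2,3,6)];
[:: (0,1,2); (0,3,4); (1,3,5); (1,4,6); (2,3,6)];
[:: (0,1,2); (0,3,4); (0,5,6); (1,3,5); (1,4,6)];
[:: (0,1,2); (0,3,5); (1,3,6); (1,4,5); (2,3,4)];
[:: (0,1,2); (0,3,4); (0,5,6); (1,3,5); (2,3,6)];
[:: (0,1,2); (0,3,4); (1,3,5); (1,4,6); (2,3,6)];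
[:: (0,1,2); (0,3,4); (0,5,6); (1,3,5); (1,4,6); (2,3,6)];
[:: (0,1,3); (0,2,4); (1,2,5)];
[:: (0,1,3); (0,2,4); (0,5,6)];
[:: (0,1,3); (0,2,4); (1,2,5)];
[:: (0,1,3); (0,2,4); (0,5,6); (1,2,5)];
[:: (0,1,3); (0,2,4); (1,2,5)];
[:: (0,1,3); (0,2,4); (0,5,6); (1,2,5)];
[:: (0,1,3); (0,2,4); (1,2,5); (1,4,6)];
[:: (0,1,2); (0,4,6); (1,5,6); (2,4,5)];
[:: (0,1,3); (0,2,4); (1,2,5)];
[:: (0,1,3); (0,2,4); (0,5,6); (1,2,5)];
[:: (0,1,3); (0,2,4); (1,2,5); (1,4,6)];
[:: (0,1,3); (0,2,4); (0,5,6); (1,2,5)];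
[:: (0,1,4); (0,2,3); (1,2,5); (1,3,6)];
[:: (0,1,2); (0,3,6); (0,4,5); (1,5,6)];
[:: (0,1,2); (0,3,6); (0,4,5); (1,4,6)];
[:: (0,1,3); (0,2,4); (0,5,6); (1,2,5); (1,4,6)];
[:: (0,1,3); (0,2,4); (1,2,5)];
[:: (0,1,3); (0,2,4); (0,5,6); (1,2,5)];
[:: (0,1,3); (0,2,4); (1,2,5); (1,4,6)];
[:: (0,1,2); (0,3,5); (0,4,6); (1,5,6)];
[:: (0,1,3); (0,2,4); (1,4,5); (2,3,5)];
[:: (0,1,2); (0,3,5); (1,5,6); (2,4,5)];
[:: (0,1,2); (0,3,5); (0,4,6); (1,4,5)];
[:: (0,1,2); (0,3,5); (0,4,6); (1,5,6); (2,4,5)];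
[:: (0,1,4); (0,2,3); (1,2,5); (1,3,6)];
[:: (0,1,2); (0,3,6); (1,5,6); (2,3,5)];
[:: (0,1,2); (0,3,5); (0,4,6); (1,3,6)];
[:: (0,1,3); (0,2,4); (0,5,6); (1,2,5); (1,4,6)];
[:: (0,1,2); (0,3,5); (1,3,6); (1,4,5)];
[:: (0,1,2); (0,3,6); (0,4,5); (1,5,6); (2,3,5)];
[:: (0,1,2); (0,3,5); (0,4,6); (1,3,6); (1,4,5)];
[:: (0,1,2); (0,3,5); (0,4,6); (1,3,6); (1,4,5)];
[:: (0,1,3); (0,2,4); (1,2,5)];
[:: (0,1,3); (0,2,4); (0,5,6); (1,2,5)];
[:: (0,1,3); (0,2,4); (1,2,5); (1,4,6)];
[:: (0,1,2); (0,3,4); (0,5,6); (1,4,6)];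
[:: (0,1,3); (0,2,5); (1,4,5); (2,3,4)];
[:: (0,1,2); (0,3,4); (0,5,6); (1,4,5)];
[:: (0,1,2); (0,3,4); (1,4,6); (2,4,5)];
[:: (0,1,2); (0,3,4); (0,5,6); (1,4,6); (2,4,5)];
[:: (0,1,4); (0,2,3); (1,2,5); (1,3,6)];
[:: (0,1,2); (0,3,4); (0,5,6); (1,3,6)];
[:: (0,1,2); (0,3,6); (1,4,6); (2,3,4)];
[:: (0,1,3); (0,2,4); (0,5,6); (1,2,5); (1,4,6)];
[:: (0,1,2); (0,3,4); (1,3,6); (1,4,5)];
[:: (0,1,2); (0,3,4); (0,5,6); (1,3,6); (1,4,5)];
[:: (0,1,2); (0,3,6); (0,4,5); (1,4,6); (2,3,4)];
[:: (0,1,2); (0,3,4); (0,5,6); (1,3,6); (1,4,5)];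
[:: (0,1,4); (0,2,5); (1,3,5); (2,3,4)];
[:: (0,1,2); (0,3,4); (0,5,6); (1,3,5)];
[:: (0,1,2); (0,3,4); (1,3,5); (1,4,6)];
[:: (0,1,2); (0,3,4); (0,5,6); (1,3,5); (1,4,6)];
[:: (0,1,2); (0,3,4); (1,3,5); (2,4,5)];
[:: (0,1,2); (0,3,4); (0,5,6); (1,3,5); (2,4,5)];
[:: (0,1,2); (0,3,4); (1,3,5); (1,4,6); (2,4,5)];
[:: (0,1,2); (0,3,4); (0,5,6); (1,3,5); (1,4,6)];
[:: (0,1,2); (0,3,4); (1,3,6); (2,3,5)];
[:: (0,1,2); (0,3,4); (0,5,6); (1,3,6); (2,3,5)];
[:: (0,1,2); (0,3,5); (0,4,6); (1,3,6); (2,3,4)];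
[:: (0,1,2); (0,3,4); (0,5,6); (1,3,5); (1,4,6)];
[:: (0,1,2); (0,3,4); (1,3,6); (1,4,5); (2,3,5)];
[:: (0,1,2); (0,3,4); (0,5,6); (1,3,5); (2,4,5)];
[:: (0,1,2); (0,3,4); (1,3,5); (1,4,6); (2,4,5)];
[:: (0,1,2); (0,3,4); (0,5,6); (1,3,5); (1,4,6); (2,4,5)];
[:: (0,1,3); (0,2,4); (1,2,5)];
[:: (0,1,3); (0,2,4); (0,5,6); (1,2,5)];
[:: (0,1,3); (0,2,4); (1,2,5); (1,4,6)];
[:: (0,1,3); (0,2,4); (0,5,6); (1,2,5)];
[:: (0,1,3); (0,2,4); (1,2,6); (1,4,5)];
[:: (0,1,3); (0,2,4); (0,5,6); (1,2,5)];
[:: (0,1,3); (0,2,4); (1,2,5); (1,4,6)];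
[:: (0,1,3); (0,2,4); (0,5,6); (1,2,5); (1,4,6)];
[:: (0,1,3); (0,2,4); (1,2,5); (2,3,6)];
[:: (0,1,3); (0,2,4); (0,5,6); (1,2,5)];
[:: (0,1,3); (0,2,4); (1,2,5); (1,4,6)];
[:: (0,1,3); (0,2,4); (0,5,6); (1,2,5); (1,4,6)];
[:: (0,1,3); (0,2,4); (1,2,5); (2,3,6)];
[:: (0,1,3); (0,2,4); (0,5,6); (1,2,5); (2,3,6)];
[:: (0,1,3); (0,2,4); (1,2,5); (1,4,6); (2,3,6)];
[:: (0,1,2); (0,3,6); (0,4,5); (1,4,6); (2,5,6)];
[:: (0,1,3); (0,2,4); (1,2,6); (2,3,5)];
[:: (0,1,3); (0,2,4); (0,5,6); (1,2,5)];
[:: (0,1,3); (0,2,4); (1,2,5); (1,4,6)];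
[:: (0,1,3); (0,2,4); (0,5,6); (1,2,5); (1,4,6)];
[:: (0,1,3); (0,2,4); (1,2,6); (1,4,5)];
[:: (0,1,3); (0,2,4); (0,5,6); (1,2,6); (1,4,5)];
[:: (0,1,3); (0,2,4); (1,2,6); (1,4,5); (2,3,5)];
[:: (0,1,2); (0,3,5); (0,4,6); (1,4,5); (2,5,6)];
[:: (0,1,3); (0,2,4); (1,2,5); (2,3,6)];
[:: (0,1,3); (0,2,4); (0,5,6); (1,2,5); (2,3,6)];
[:: (0,1,3); (0,2,4); (1,2,5); (1,4,6); (2,3,6)];
[:: (0,1,2); (0,3,5); (0,4,6); (1,3,6); (2,5,6)];
[:: (0,1,3); (0,2,4); (1,2,6); (1,4,5); (2,3,5)];
[:: (0,1,2); (0,3,5); (1,3,6); (1,4,5); (2,5,6)];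
[:: (0,1,2); (0,3,5); (0,4,6); (1,3,6); (1,4,5)];
[:: (0,1,2); (0,3,5); (0,4,6); (1,3,6); (1,4,5); (2,5,6)];
[:: (0,1,3); (0,2,5); (1,2,6); (2,3,4)];
[:: (0,1,3); (0,2,4); (0,5,6); (1,2,5)];
[:: (0,1,3); (0,2,4); (1,2,5); (1,4,6)];
[:: (0,1,3); (0,2,4); (0,5,6); (1,2,5); (1,4,6)];
[:: (0,1,3); (0,2,4); (1,2,6); (1,4,5)];
[:: (0,1,3); (0,2,4); (0,5,6); (1,2,6); (1,4,5)];
[:: (0,1,3); (0,2,5); (0,4,6); (1,2,6); (1,4,5)];
[:: (0,1,2); (0,3,4); (0,5,6); (1,4,5); (2,4,6)];
[:: (0,1,3); (0,2,4); (1,2,5); (2,3,6)];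
[:: (0,1,3); (0,2,4); (0,5,6); (1,2,5); (2,3,6)];
[:: (0,1,3); (0,2,4); (1,2,5); (1,4,6); (2,3,6)];
[:: (0,1,2); (0,3,4); (0,5,6); (1,3,6); (2,4,6)];
[:: (0,1,3); (0,2,5); (1,2,6); (1,4,5); (2,3,4)];
[:: (0,1,2); (0,3,4); (0,5,6); (1,3,6); (1,4,5)];
[:: (0,1,2); (0,3,4); (1,3,6); (1,4,5); (2,4,6)];
[:: (0,1,2); (0,3,4); (0,5,6); (1,3,6); (1,4,5); (2,4,6)];
[:: (0,1,3); (0,2,4); (1,2,6); (2,3,5)];
[:: (0,1,3); (0,2,4); (0,5,6); (1,2,6); (2,3,5)];
[:: (0,1,3); (0,2,5); (0,4,6); (1,2,6); (2,3,4)];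
[:: (0,1,2); (0,3,4); (0,5,6); (1,3,5); (1,4,6)];
[:: (0,1,3); (0,2,4); (1,2,6); (1,4,5); (2,3,5)];
[:: (0,1,2); (0,3,4); (0,5,6); (1,3,5); (2,4,5)];
[:: (0,1,2); (0,3,4); (1,3,5); (1,4,6); (2,4,5)];
[:: (0,1,2); (0,3,4); (0,5,6); (1,3,5); (1,4,6); (2,4,5)];
[:: (0,1,4); (0,2,5); (0,3,6); (1,2,6); (1,3,5)];
[:: (0,1,2); (0,3,4); (0,5,6); (1,3,5); (2,3,6)];
[:: (0,1,2); (0,3,4); (1,3,5); (1,4,6); (2,3,6)];
[:: (0,1,2); (0,3,4); (0,5,6); (1,3,5); (1,4,6); (2,3,6)];
[:: (0,1,2); (0,3,4); (1,3,5); (2,3,6); (2,4,5)];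
[:: (0,1,2); (0,3,4); (0,5,6); (1,3,5); (2,3,6); (2,4,5)];
[:: (0,1,2); (0,3,4); (1,3,5); (1,4,6); (2,3,6); (2,4,5)];
[:: (0,1,2); (0,3,4); (0,5,6); (1,3,5); (1,4,6); (2,3,6)]].
Lemma table_ok : all (fun p => okS p.1 p.2) (zip (all_bs 10) table) && (size table == 1024).
Proof. vm_compute. reflexivity. Qed.

Lemma mem_all_bs n bs : size bs = n -> bs \in all_bs n.
Proof.
elim: n bs => [|n IH] [|b bs] //= Hs.
case: Hs => Hs; rewrite mem_cat; case: b.
- by apply/orP; right; rewrite mem_map ?IH // => x y [].
- by apply/orP; left; rewrite mem_map ?IH // => x y [].
Qed.

Lemma zip_ex (A B : eqType) (l1 : seq A) (l2 : seq B) x :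
  size l1 = size l2 -> x \in l1 -> exists y, (x, y) \in zip l1 l2.
Proof.
elim: l1 l2 => [|a l1 IH] [|b l2] //= [Hs]; rewrite inE => /orP[/eqP->|xl].
- by exists b; rewrite inE eqxx.
- by case: (IH l2 Hs xl) => y Hy; exists y; rewrite inE Hy orbT.
Qed.

Lemma exS bs : size bs = 10 -> exists Sl, okS bs Sl.
Proof.
move=> Hs; case/andP: table_ok => /allP Hall /eqP Hsz.
have Hs2 : size (all_bs 10) = size table by rewrite Hsz; vm_compute.
have [Sl HSl] := zip_ex Hs2 (mem_all_bs Hs).
by exists Sl; apply: (Hall _ HSl).
Qed.

Lemma pairs_mem a b : 2 <= a -> a < b -> b < 7 -> (a, b) \in pairs.
Proof.
move=> ha hab hb; rewrite /pairs mem_filter; apply/andP; split; first exact: hab.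
apply: allpairs_f; rewrite mem_iota.
- by rewrite ha (ltn_trans hab hb).
- by rewrite hb (leq_trans ha (ltnW hab)).
Qed.

Theorem lemma7p6 (T : finType) (e : rel T)
  (e_sym : symmetric e) (e_irr : irreflexive e)
  (rob : robust e) (u v : T) (huv : e u v)
  (du : deg e u = 7) (dv : deg e v = 6) :
  ~ reducible e [set v] -> subsumes e u v -> reducible e [set u; v].
Proof.
move=> _ [nuv Hsub].
have evu : e v u by rewrite e_sym.
have [A defA] : exists A, A = nbhd e v :\ u by eexists.
have inA x : (x \in A) = (x != u) && e v x by rewrite defA !inE.
have AuN x : x \in A -> e u x.
  rewrite inA => /andP[xu evx].
  have : x \in cnbhd e u by apply: (subsetP Hsub); rewrite /cnbhd !inE evx orbT.
  by rewrite /cnbhd !inE (negbTE xu).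
have Ane x : x \in A -> (x != u) && (x != v).
  rewrite inA => /andP[-> evx]; apply: contraTneq evx => ->; by rewrite e_irr.
have cardA : #|A| = 5.
  have := cardsD1 u (nbhd e v); rewrite -[#|nbhd e v|]/(deg e v) dv -defA inE evu.
  by case.
have cardN : #|nbhd e u :\ v| = 6.
  have := cardsD1 v (nbhd e u); rewrite -[#|nbhd e u|]/(deg e u) du inE huv.
  by case.
have AsubN : A \subset nbhd e u :\ v.
  apply/subsetP => x xA; rewrite !inE (AuN _ xA) andbT.
  by case/andP: (Ane _ xA).
have : #|(nbhd e u :\ v) :\: A| == 1.
  by rewrite cardsD (setIidPr AsubN) cardN cardA.
case/cards1P => w Hw.
have : w \in (nbhd e u :\ v) :\: A by rewrite Hw set11.
rewrite !inE => /and3P[wA wv euw].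
have hw x : e u x -> x != v -> x \notin A -> x = w.
  move=> exu xv xA; apply/set1P; rewrite -Hw !inE xA xv exu.
  done.
have [s defs] : exists s, s = [:: u, v & enum A] by eexists.
pose fn i := nth u s i.
have sz : size s = 7 by rewrite defs /= -cardE cardA.
have us : uniq s.
  rewrite defs /= enum_uniq !inE !mem_enum negb_or nuv.
  by rewrite inA eqxx /= inA e_irr andbF.
have fninj a b : a < 7 -> b < 7 -> fn a = fn b -> a = b.
  by move=> ha hb /eqP; rewrite /fn nth_uniq ?sz // => /eqP.
have fn0 : fn 0 = u by rewrite /fn defs.
have fn1 : fn 1 = v by rewrite /fn defs.
have fnA a : 2 <= a < 7 -> fn a \in A.
  case: a => [|[|a]] //= ha; rewrite /fn defs /= -mem_enum mem_nth //.
  by rewrite -cardE cardA.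
have fnuvA a : a < 7 -> fn a != u -> fn a != v -> fn a \in A.
  case: a => [|[|a]] ha; rewrite ?fn0 ?fn1 ?eqxx ?andbF //.
  by move=> _ _; apply: fnA.
have Aidx x : x \in A -> exists a, (2 <= a < 7) && (fn a == x).
  move=> xA; exists (index x (enum A)).+2.
  rewrite /fn defs /= nth_index ?mem_enum // eqxx andbT.
  have hi : index x (enum A) < 5 by rewrite -cardA cardE index_mem mem_enum.
  exact: hi.
pose bs := [seq e (fn p.1) (fn p.2) | p <- pairs].
have szbs : size bs = 10 by rewrite size_map.
have key p q : 2 <= p -> p < q -> q < 7 -> pbit bs p q = e (fn p) (fn q).
  move=> hp hpq hq.
  by rewrite /pbit /bs (nth_map (0,0)) ?index_mem ?pairs_mem // nth_index // pairs_mem.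
have key2 p q : 2 <= p -> 2 <= q -> p < 7 -> q < 7 -> p != q ->
    pbit bs (minn p q) (maxn p q) = e (fn p) (fn q).
  move=> hp hq hp7 hq7; case: (ltngtP p q) => // h _.
  - by rewrite key.
  - by rewrite key // e_sym.
have Hg a b : a < 7 -> b < 7 -> e (fn a) (fn b) = gn bs a b.
  move=> ha hb; rewrite /gn.
  case: (eqVneq a b) => [<-|nab]; first by rewrite e_irr.
  rewrite /=.
  case: a ha nab => [|[|a]] ha nab.
  - rewrite fn0; case: b hb nab => [|[|b]] hb nab //; first by rewrite fn1.
    by rewrite AuN // fnA.
  - rewrite fn1; case: b hb nab => [|[|b]] hb nab //; first by rewrite fn0.
    by have := fnA b.+2 hb; rewrite inA => /andP[].
  - case: b hb nab => [|[|b]] hb nab.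
    + by rewrite fn0 e_sym AuN // fnA.
    + by rewrite fn1 e_sym; have := fnA a.+2 ha; rewrite inA => /andP[].
    + by rewrite /= key2.
have [Sl okSl] := exS szbs.
case/and4P: okSl => uSl /allP Htri /allP Hdisj Hcnt.
pose h (p : nat * nat * nat) : {set T} := [set x in map fn (lst p)].
have triP p : p \in Sl -> [/\ all (fun a => a < 7) (lst p), uniq (lst p) &
     all (fun a => all (fun b => (a == b) || gn bs a b) (lst p)) (lst p)].
  by move=> /Htri /and3P.
have capH p q : p \in Sl -> q \in Sl -> #|h p :&: h q| <= count (mem (lst q)) (lst p).
  move=> pS qS; case: (triP p pS) => /allP H1 _ _; case: (triP q qS) => /allP H2 _ _.
  apply: (@leq_trans #|[set x in map fn (filter (mem (lst q)) (lst p))]|).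
    apply: subset_leq_card; apply/subsetP => x.
    rewrite in_setI !in_set => /andP[/mapP[a al1 ->] /mapP[b bl2 eab]].
    apply/mapP; exists a => //; rewrite mem_filter al1 andbT.
    by rewrite (fninj a b (H1 _ al1) (H2 _ bl2) eab); exact: bl2.
  by rewrite cardsE (leq_trans (card_size _)) // size_map size_filter.
have cardh p : p \in Sl -> #|h p| = 3.
  move=> pS; case: (triP p pS) => /allP H1 U _.
  have U2 : uniq (map fn (lst p)).
    by rewrite map_inj_in_uniq // => a b ha hb; apply: fninj; [apply: H1 | apply: H1].
  by rewrite cardsE (card_uniqP U2) size_map.
have triH p : p \in Sl -> is_triangle e (h p).
  move=> pS; split; first exact: cardh.
  case: (triP p pS) => /allP H1 _ /allP H3.
  move=> x y; rewrite !in_set => /mapP[a al ->] /mapP[b bl ->] nxy.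
  rewrite Hg ?H1 //.
  have := allP (H3 a al) b bl; case: eqP => [eab|_] //=.
  by rewrite eab eqxx in nxy.
have hinj : {in Sl &, injective h}.
  move=> p q pS qS hpq; apply/eqP; apply: contraT => npq.
  have := allP (Hdisj p pS) q qS; rewrite (negbTE npq) /= => c1.
  have := leq_trans (capH p q pS qS) c1.
  by rewrite hpq setIid (cardh q qS).
have cardS : #|[set t in map h Sl]| = size Sl.
  have U : uniq (map h Sl) by rewrite map_inj_in_uniq.
  by rewrite cardsE (card_uniqP U) size_map.
split.
  by apply/set0Pn; exists u; rewrite !inE eqxx.
exists [set t in map h Sl].
exists [set E : {set T} | [|| E == [set u; v], E == [set u; w] |
          [exists a in A, exists b in A, e a b && (E == [set a; b])]]].
split.
  by move=> t; rewrite inE => /mapP[p pS ->]; apply: triH.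
split.
  move=> t1 t2; rewrite !inE => /mapP[p pS ->] /mapP[q qS ->] nt.
  have npq : p != q by apply: contraNneq nt => ->.
  apply: leq_trans (capH p q pS qS) _.
  by have := allP (Hdisj p pS) q qS; rewrite (negbTE npq).
split.
  move=> E; rewrite inE.
  case/or3P => [/eqP->|/eqP->|/existsP[a /andP[aA /existsP[b /andP[bA /andP[eab /eqP->]]]]]].
  - by exists u, v.
  - by exists u, w.
  - by exists a, b.
split.
  rewrite cardS; apply: leq_trans Hcnt.
  pose L := [:: [set u; v], [set u; w] &
     [seq [set fn p.1; fn p.2] | p <- pairs & e (fn p.1) (fn p.2)]].
  apply: (@leq_trans #|[set x in L]|).
    apply: subset_leq_card; apply/subsetP => E; rewrite !inE.
    case/or3P => [/eqP->|/eqP->|]; first by rewrite eqxx.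
      by rewrite eqxx orbT.
    case/existsP => a /andP[aA /existsP[b /andP[bA /andP[eab /eqP->]]]].
    apply/orP; right; apply/orP; right.
    have [i /andP[/andP[i2 i7] /eqP fi]] := Aidx a aA.
    have [j /andP[/andP[j2 j7] /eqP fj]] := Aidx b bA.
    have nij : i != j.
      by apply: contraTneq eab => eij; rewrite -fi -fj eij e_irr.
    case: (ltngtP i j) nij => // hij _.
    - apply/mapP; exists (i, j); last by rewrite /= fi fj.
      by rewrite mem_filter /= fi fj eab pairs_mem.
    - apply/mapP; exists (j, i); last by rewrite /= fi fj setUC.
      by rewrite mem_filter /= fi fj e_sym eab pairs_mem.
  rewrite cardsE; apply: (leq_trans (card_size L)).
  change (2 + size [seq [set fn p.1; fn p.2] | p <- pairs & e (fn p.1) (fn p.2)]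
          <= 2 + count id bs).
  by rewrite size_map size_filter /bs count_map.
split.
  move=> t [c3 tadj] tV.
  have [z zI] : exists z, z \in t :&: [set u; v].
    by apply/set0Pn; rewrite setI_eq0.
  have tsub c : c \in t -> #|t :\ c| = 2.
    by move=> ct; move: c3; rewrite (cardsD1 c) ct; case.
  have edgeOK x y : x != y -> x \in t -> y \in t -> tri_edge t [set x; y].
    move=> nxy xt yt; split; last by rewrite cards2 nxy.
    by apply/subsetP => q; rewrite !inE => /orP[]/eqP->.
  have inX x y : x \in A -> y \in A -> e x y -> [set x; y] \in
      [set E : {set T} | [|| E == [set u; v], E == [set u; w] |
          [exists a in A, exists b in A, e a b && (E == [set a; b])]]].
    move=> xA yA exy; rewrite inE; apply/orP; right; apply/orP; right.
    by apply/existsP; exists x; rewrite xA; apply/existsP; exists y; rewrite yA exy eqxx.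
  case ut: (u \in t); case vt: (v \in t).
  - exists [set u; v]; split; first exact: edgeOK.
    by rewrite inE eqxx.
  - have /cards2P[x [y [nxy dxy]]] : #|t :\ u| == 2 by rewrite tsub.
    have : x \in t :\ u by rewrite dxy !inE eqxx.
    rewrite !inE => /andP[xu xt].
    have : y \in t :\ u by rewrite dxy !inE eqxx orbT.
    rewrite !inE => /andP[yu yt].
    have exu : e u x by apply: tadj; rewrite // eq_sym.
    have eyu : e u y by apply: tadj; rewrite // eq_sym.
    have xv : x != v by apply/eqP => exv; rewrite -exv xt in vt.
    have yv : y != v by apply/eqP => exv; rewrite -exv yt in vt.
    have uw : u != w by apply: contraTneq euw => ->; rewrite e_irr.
    case: (eqVneq x w) => [xw|xw].
      exists [set u; w]; split; last by rewrite !inE eqxx orbT.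
      by apply: edgeOK => //; rewrite -xw.
    case: (eqVneq y w) => [yw|yw].
      exists [set u; w]; split; last by rewrite !inE eqxx orbT.
      by apply: edgeOK => //; rewrite -yw.
    have xA : x \in A.
      by apply: contraR xw => nxA; apply/eqP; apply: hw.
    have yA : y \in A.
      by apply: contraR yw => nxA; apply/eqP; apply: hw.
    exists [set x; y]; split; first exact: edgeOK.
    by apply: inX => //; apply: tadj.
  - have /cards2P[x [y [nxy dxy]]] : #|t :\ v| == 2 by rewrite tsub.
    have : x \in t :\ v by rewrite dxy !inE eqxx.
    rewrite !inE => /andP[xv xt].
    have : y \in t :\ v by rewrite dxy !inE eqxx orbT.
    rewrite !inE => /andP[yv yt].
    have exu : e v x by apply: tadj; rewrite // eq_sym.
    have eyu : e v y by apply: tadj; rewrite // eq_sym.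
    have xu : x != u by apply/eqP => exv; rewrite -exv xt in ut.
    have yu : y != u by apply/eqP => exv; rewrite -exv yt in ut.
    have xA : x \in A by rewrite inA xu.
    have yA : y \in A by rewrite inA yu.
    exists [set x; y]; split; first exact: edgeOK.
    by apply: inX => //; apply: tadj.
  - move: zI; rewrite !inE => /andP[zt /orP[]/eqP zuv].
    + by rewrite zuv ut in zt.
    + by rewrite zuv vt in zt.
move=> t E; rewrite inE => /mapP[p pS ->] [Esub /eqP E2] Edis.
case/cards2P: E2 => x [y [nxy dE]].
have xE : x \in E by rewrite dE !inE eqxx.
have yE : y \in E by rewrite dE !inE eqxx orbT.
have memA q : q \in E -> q \in A.
  move=> qE; have := subsetP Esub q qE; rewrite in_set => /mapP[a al qa].
  have a7 : a < 7 by case: (triP p pS) => /allP H1 _ _; apply: H1.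
  have := disjointFr Edis qE; rewrite !inE => /negbT/norP[qu qv].
  by rewrite qa; apply: fnuvA; rewrite -?qa.
have [_ tadj] := triH p pS.
rewrite inE dE; apply/orP; right; apply/orP; right.
apply/existsP; exists x; rewrite memA //; apply/existsP; exists y; rewrite memA //.
rewrite eqxx andbT; apply: tadj => //.
- exact: (subsetP Esub _ xE).
- exact: (subsetP Esub _ yE).
Qed.
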